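(* Consider a QRW on the non-negative integers with non trivial coins. All local states of the walk are transient if and only if the state $|0\rangle\otimes|\uparrow\rangle$ is transient.
   Context: Coins: for each $i\ge0$, $C_i=(c^i_{kl})_{k,l=1,2}$ is a $2\times2$ unitary matrix with $c^i_{11}\ne0$ (non trivial). Number the pure states $|0\uparrow\rangle,|0\downarrow\rangle,|1\uparrow\rangle,|1\downarrow\rangle,\dots$ as $0,1,2,3,\dots$. The unitary transition matrix $U=(U_{j,k})$ ($U_{j,k}$ = one-step amplitude from state $j$ to state $k$) has only the non-zero entries $U_{2i,2i+2}=c^i_{11}$, $U_{2i+1,2i+2}=c^i_{12}$ ($i\ge0$), $U_{2i,2i-1}=c^i_{21}$, $U_{2i+1,2i-1}=c^i_{22}$ ($i\ge1$), $U_{0,0}=c^0_{21}$, $U_{1,0}=c^0_{22}$. A state is a unit row vector $\psi\in\ell^2$; it is recurrent if $\sum_{n\ge1}|\psi U^n\psi^\dagger|^2=\infty$ and transient otherwise. A local state is a state that is a superposition of finitely many pure states (finitely many nonzero components). *)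

(* Defs.v *)
From HB Require Import structures.
From mathcomp Require Import all_boot all_order all_algebra.
From mathcomp Require Import complex.
From mathcomp Require Import all_classical all_reals all_analysis.
Set Implicit Arguments. Unset Strict Implicit. Unset Printing Implicit Defensive.
Import Order.TTheory GRing.Theory Num.Theory.
Import numFieldNormedType.Exports.
Local Open Scope ring_scope.

Section QRW.
Variable R : realType.

Definition cnorm2 (z : R[i]) : R := (complex.Re z) ^+ 2 + (complex.Im z) ^+ 2.

Definition unitary2 (C : 'M[R[i]]_2) : Prop :=
  C *m (map_mx (fun z : R[i] => z^*) C)^T = 1%:M.

(* Coins C i = (c^i_{kl}); entry c^i_{kl} is (C i) (k-1) (l-1).
   Pure states |i,up> = 2i, |i,down> = 2i+1. *)
Definition coin (C : nat -> 'M[R[i]]_2) (i : nat) (k l : 'I_2) : R[i] := C i k l.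

Definition ord1_2 : 'I_2 := @Ordinal 2 0 isT.
Definition ord2_2 : 'I_2 := @Ordinal 2 1 isT.

(* Transition matrix U_{j,k}: one-step amplitude from pure state j to k.
     U_{2i,2i+2} = c^i_11, U_{2i+1,2i+2} = c^i_12       (i >= 0)
     U_{2i,2i-1} = c^i_21, U_{2i+1,2i-1} = c^i_22       (i >= 1)
     U_{0,0} = c^0_21,     U_{1,0} = c^0_22
   all other entries are 0. *)
Definition Umat (C : nat -> 'M[R[i]]_2) (j k : nat) : R[i] :=
  let i := j./2 in
  let col := if odd j then ord2_2 else ord1_2 in
  if k == i.*2.+2 then coin C i ord1_2 col
  else if (0 < i)%N && (k == i.*2.-1) then coin C i ord2_2 col
  else if (i == 0)%N && (k == 0)%N then coin C i ord2_2 col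
  else 0.

(* Row vector times U: (psi U)_k = sum_j psi_j U_{j,k}.  Since U_{j,k} = 0
   whenever j > k+2, the sum over j reduces to the finite sum j < k+3. *)
Definition stepU (C : nat -> 'M[R[i]]_2) (psi : nat -> R[i]) : nat -> R[i] :=
  fun k => \sum_(j < k.+3) psi j * Umat C j k.

Definition evolve (C : nat -> 'M[R[i]]_2) (n : nat) (psi : nat -> R[i]) :=
  iter n (stepU C) psi.

Definition inner (phi psi : nat -> R[i]) : R[i] :=
  Complex (limn (series (fun k => complex.Re (phi k * (psi k)^*))))
          (limn (series (fun k => complex.Im (phi k * (psi k)^*)))).

Definition is_state (psi : nat -> R[i]) : Prop :=
  (\sum_(k <oo) ((cnorm2 (psi k))%:E) = 1)%E.

Definition local_state (psi : nat -> R[i]) : Prop :=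
  is_state psi /\ exists N : nat, forall k, (N <= k)%N -> psi k = 0.

Definition recurrent (C : nat -> 'M[R[i]]_2) (psi : nat -> R[i]) : Prop :=
  (\sum_(1 <= n <oo) ((cnorm2 (inner (evolve C n psi) psi))%:E) = +oo)%E.

Definition transient (C : nat -> 'M[R[i]]_2) (psi : nat -> R[i]) : Prop :=
  ~ recurrent C psi.

Definition e0 : nat -> R[i] := fun k => if k == 0%N then 1 else 0.

End QRW.

(* Main.v *)
Require Import Defs.
From HB Require Import structures.
From mathcomp Require Import all_boot all_order all_algebra.
From mathcomp Require Import complex.
From mathcomp Require Import all_classical all_reals all_analysis.
From mathcomp Require Import zify ring lra.
Import Order.TTheory GRing.Theory Num.Theory.
Import numFieldNormedType.Exports.
Local Open Scope ring_scope.
Set Implicit Arguments. Unset Strict Implicit. Unset Printing Implicit Defensive.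


Definition colj (j : nat) : 'I_2 := if odd j then ord2_2 else ord1_2.

Lemma UmatE (R : realType) (C : nat -> 'M[R[i]]_2) j k :
  Umat C j k = (k == (j./2).*2.+2)%:R * C (j./2) ord1_2 (colj j)
             + (k == (j./2).*2.-1)%:R * C (j./2) ord2_2 (colj j).
Proof.
rewrite /Umat /coin /colj.
case: (j./2) => [|i] /=.
  case: k => [|[|[|k]]] //=; rewrite ?mul0r ?mul1r ?addr0 ?add0r //.
case: eqP => [->|ne].
  rewrite mul1r doubleS /=.
  case: eqP => [|_]; last by rewrite mul0r addr0.
  lia.
rewrite mul0r add0r.
by case: eqP => _; rewrite ?mul1r ?mul0r.
Qed.
Lemma unitary_cols (R : realType) (M : 'M[R[i]]_2) : unitary2 M ->
  forall a b : 'I_2, M ord1_2 a * (M ord1_2 b)^* + M ord2_2 a * (M ord2_2 b)^*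
     = (a == b)%:R.
Proof.
rewrite /unitary2 => /mulmx1C H a b.
have := congr1 (fun A : 'M[R[i]]_2 => (A a b)^*) H.
rewrite mxE big_ord_recr big_ord_recr big_ord0 /= add0r !mxE.
rewrite rmorphD !rmorphM /= !conjCK.
have -> : (widen_ord (leqnSn 1) ord_max : 'I_2) = ord1_2 by apply/val_inj.
have -> : (ord_max : 'I_2) = ord2_2 by apply/val_inj.
by rewrite conjC_nat.
Qed.

Lemma sum_ind (R : realType) N t (F : nat -> R[i]) : (t < N)%N ->
  \sum_(k < N) ((k : nat) == t)%:R * F k = F t.
Proof.
move=> tN; rewrite (bigD1 (Ordinal tN)) //= eqxx mul1r big1 ?addr0 //.
move=> k /eqP kt; case: (@eqP _ (k : nat) t) => [ekt|]; last by rewrite mul0r.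
by exfalso; apply: kt; apply/val_inj.
Qed.

Lemma dbl_ne1 a b : (a.*2.+2 == b.*2.-1) = false.
Proof. apply/eqP; rewrite -!muln2; lia. Qed.
Lemma dbl_ne2 a b : (a.*2.-1 == b.*2.+2) = false.
Proof. apply/eqP; rewrite -!muln2; lia. Qed.
Lemma dbl_eq1 a b : (a.*2.+2 == b.*2.+2) = (a == b).
Proof. apply/eqP/eqP; rewrite -!muln2; lia. Qed.
Lemma dbl_eq2 a b : (a.*2.-1 == b.*2.-1) = (a == b).
Proof. apply/eqP/eqP; rewrite -!muln2; lia. Qed.

Lemma Umat_orth (R : realType) (C : nat -> 'M[R[i]]_2) :
  (forall n, unitary2 (C n)) ->
  forall j j' N, (j.+3 <= N)%N -> (j'.+3 <= N)%N ->
  \sum_(k < N) Umat C j k * (Umat C j' k)^* = (j == j')%:R.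
Proof.
move=> hU j j' N hj hj'.
have E : forall k, Umat C j k * (Umat C j' k)^* =
   (k == (j./2).*2.+2)%:R * ((k == (j'./2).*2.+2)%:R * (C (j./2) ord1_2 (colj j) * (C (j'./2) ord1_2 (colj j'))^*))
 + (k == (j./2).*2.+2)%:R * ((k == (j'./2).*2.-1)%:R * (C (j./2) ord1_2 (colj j) * (C (j'./2) ord2_2 (colj j'))^*))
 + ((k == (j./2).*2.-1)%:R * ((k == (j'./2).*2.+2)%:R * (C (j./2) ord2_2 (colj j) * (C (j'./2) ord1_2 (colj j'))^*))
 + (k == (j./2).*2.-1)%:R * ((k == (j'./2).*2.-1)%:R * (C (j./2) ord2_2 (colj j) * (C (j'./2) ord2_2 (colj j'))^*))).
  move=> k; rewrite !UmatE rmorphD !rmorphM /= !conjC_nat; ring.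
rewrite (eq_bigr _ (fun (k : 'I_N) _ => E k)) !big_split /=.
have h1 : ((j./2).*2.+2 < N)%N by move: (odd_double_half j) hj; lia.
have h2 : ((j./2).*2.-1 < N)%N by move: (odd_double_half j) hj; lia.
rewrite (sum_ind (fun k : nat => (k == (j'./2).*2.+2)%:R * _) h1).
rewrite (sum_ind (fun k : nat => (k == (j'./2).*2.-1)%:R * _) h1).
rewrite (sum_ind (fun k : nat => (k == (j'./2).*2.+2)%:R * _) h2).
rewrite (sum_ind (fun k : nat => (k == (j'./2).*2.-1)%:R * _) h2).
rewrite dbl_ne1 dbl_ne2 !mul0r addr0 add0r dbl_eq1 dbl_eq2.
have [eh|nh] := eqVneq (j./2) (j'./2); last first.
  rewrite !mul0r addr0; case: eqP => // ejj.
  by rewrite ejj eqxx in nh.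
rewrite !mul1r -eh unitary_cols //.
suff -> : (colj j == colj j') = (j == j') by []. apply/eqP/eqP => [ec|->//].
rewrite -(odd_double_half j) -(odd_double_half j') eh.
congr (_ + _); move: ec; rewrite /colj.
by case: (odd j); case: (odd j').
Qed.

Definition supp_le (R : realType) (psi : nat -> R[i]) L := forall k, (L <= k)%N -> psi k = 0.

Lemma sum_widen0 (V : zmodType) n1 n2 (F : nat -> V) : (n1 <= n2)%N ->
  (forall i, (n1 <= i)%N -> (i < n2)%N -> F i = 0) ->
  \sum_(i < n1) F i = \sum_(i < n2) F i.
Proof.
move=> le12 H; rewrite (big_ord_widen _ _ le12) big_mkcond /=.
apply: eq_bigr => i _; case: ifP => // /negbT; rewrite -leqNgt => h.
by rewrite H.
Qed.

Lemma limn_series_fin (R : realType) (u : nat -> R) N :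
  (forall k, (N <= k)%N -> u k = 0) -> limn (series u) = \sum_(k < N) u k.
Proof.
move=> H; apply: lim_near_cst; first exact: Rhausdorff.
near=> n.
have nN : (N <= n)%N by near: n; exists N.
rewrite /series /= big_mkord.
by apply/esym; apply: sum_widen0 => // k hk _; exact: H.
Unshelve. all: by end_near. Qed.

Lemma inner_fin (R : realType) (phi psi : nat -> R[i]) N : supp_le phi N ->
  inner phi psi = \sum_(k < N) phi k * (psi k)^*.
Proof.
move=> H; rewrite /inner !(@limn_series_fin _ _ N); last first.
- by move=> k /H ->; rewrite mul0r.
- by move=> k /H ->; rewrite mul0r.
elim: N {H} => [|N IH]; first by rewrite !big_ord0.
rewrite !big_ord_recr /= -IH.
by case: (phi N * (psi N)^*) => a b.
Qed.

Lemma Umat0 (R : realType) (C : nat -> 'M[R[i]]_2) j k : (k.+3 <= j)%N -> Umat C j k = 0.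
Proof.
move=> h; rewrite UmatE.
have e := odd_double_half j.
have -> : (k == (j./2).*2.+2) = false by apply/eqP; move: h e; rewrite -!muln2; lia.
have -> : (k == (j./2).*2.-1) = false by apply/eqP; move: h e; rewrite -!muln2; lia.
by rewrite !mul0r addr0.
Qed.

Lemma Umat0' (R : realType) (C : nat -> 'M[R[i]]_2) j k : (j.+3 <= k)%N -> Umat C j k = 0.
Proof.
move=> h; rewrite UmatE.
have e := odd_double_half j.
have -> : (k == (j./2).*2.+2) = false by apply/eqP; move: h e; rewrite -!muln2; lia.
have -> : (k == (j./2).*2.-1) = false by apply/eqP; move: h e; rewrite -!muln2; lia.
by rewrite !mul0r addr0.
Qed.

Lemma stepU_fin (R : realType) (C : nat -> 'M[R[i]]_2) psi L k : supp_le psi L ->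
  stepU C psi k = \sum_(j < L) psi j * Umat C j k.
Proof.
move=> H; rewrite /stepU.
rewrite (@sum_widen0 _ k.+3 (k.+3 + L) (fun j => psi j * Umat C j k)) ?leq_addr //; last first.
  by move=> i h1 h2; rewrite Umat0 ?mulr0.
rewrite [RHS](@sum_widen0 _ L (k.+3 + L) (fun j => psi j * Umat C j k)) ?leq_addl //.
by move=> i h1 h2; rewrite H ?mul0r.
Qed.

Lemma stepU_supp (R : realType) (C : nat -> 'M[R[i]]_2) psi L : supp_le psi L ->
  supp_le (stepU C psi) L.+2.
Proof.
move=> H k hk; rewrite (stepU_fin _ _ H) big1 // => j _.
by rewrite Umat0' ?mulr0 //; move: (ltn_ord j) hk; lia.
Qed.

Lemma stepU_iso (R : realType) (C : nat -> 'M[R[i]]_2) :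
  (forall n, unitary2 (C n)) -> forall phi chi L,
  supp_le phi L -> supp_le chi L ->
  inner (stepU C phi) (stepU C chi) = inner phi chi.
Proof.
move=> hU phi chi L hp hc.
rewrite (inner_fin _ (stepU_supp C hp)) (inner_fin _ hp).
under eq_bigr => k _ do rewrite (stepU_fin _ _ hp) (stepU_fin _ _ hc) rmorph_sum /= mulr_suml.
rewrite exchange_big /=; apply: eq_bigr => j _.
under eq_bigr => k _ do rewrite mulr_sumr.
rewrite exchange_big /=.
under eq_bigr => j' _ do (under eq_bigr => k _ do rewrite rmorphM /= mulrACA; rewrite -mulr_sumr).
under eq_bigr => j' _ do rewrite (@Umat_orth _ _ hU j j' L.+2 (ltn_ord j) (ltn_ord j')).
rewrite (bigD1 j) //= eqxx mulr1 big1 ?addr0 // => j' /negbTE nj.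
rewrite eq_sym.
have -> : (j' == j :> nat) = false by apply/negbTE; apply: contraFN nj => /eqP h; apply/eqP/val_inj.
by rewrite mulr0.
Qed.


Lemma evolveS (R : realType) (C : nat -> 'M[R[i]]_2) n psi :
  evolve C n.+1 psi = stepU C (evolve C n psi).
Proof. by []. Qed.

Lemma evolveSr (R : realType) (C : nat -> 'M[R[i]]_2) n psi :
  evolve C n.+1 psi = evolve C n (stepU C psi).
Proof. by rewrite /evolve iterSr. Qed.

Lemma evolveD (R : realType) (C : nat -> 'M[R[i]]_2) m n psi :
  evolve C (m + n) psi = evolve C m (evolve C n psi).
Proof. by rewrite /evolve iterD. Qed.

Lemma evolve_supp (R : realType) (C : nat -> 'M[R[i]]_2) n psi L :
  supp_le psi L -> supp_le (evolve C n psi) (L + n.*2).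
Proof.
move=> H; elim: n => [|n IH]; first by rewrite addn0.
rewrite evolveS doubleS addnS addnS; exact: stepU_supp.
Qed.

Lemma supp_le_mono (R : realType) (psi : nat -> R[i]) L L' :
  (L <= L')%N -> supp_le psi L -> supp_le psi L'.
Proof. by move=> h H k hk; apply: H; apply: leq_trans hk. Qed.

Lemma evolve_iso (R : realType) (C : nat -> 'M[R[i]]_2) :
  (forall n, unitary2 (C n)) -> forall n phi chi L,
  supp_le phi L -> supp_le chi L ->
  inner (evolve C n phi) (evolve C n chi) = inner phi chi.
Proof.
move=> hU; elim=> [//|n IH] phi chi L hp hc.
rewrite !evolveS (stepU_iso hU (@evolve_supp _ C n _ _ hp) (@evolve_supp _ C n _ _ hc)).
exact: IH hp hc.
Qed.

Lemma stepU_lin (R : realType) (C : nat -> 'M[R[i]]_2) a b psi phi :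
  stepU C (fun x => a * psi x + b * phi x) =
  (fun x => a * stepU C psi x + b * stepU C phi x).
Proof.
apply: funext => k; rewrite /stepU mulr_sumr mulr_sumr -big_split /=.
by apply: eq_bigr => j _; rewrite mulrDl !mulrA.
Qed.

Lemma evolve_lin (R : realType) (C : nat -> 'M[R[i]]_2) n a b psi phi :
  evolve C n (fun x => a * psi x + b * phi x) =
  (fun x => a * evolve C n psi x + b * evolve C n phi x).
Proof. by elim: n => [//|n IH]; rewrite !evolveS IH stepU_lin. Qed.

Lemma stepU_sum (R : realType) (C : nat -> 'M[R[i]]_2) K (c : nat -> R[i]) F :
  stepU C (fun x => \sum_(i < K) c i * F i x) =
  (fun x => \sum_(i < K) c i * stepU C (F i) x).
Proof.
apply: funext => k; rewrite /stepU.
under eq_bigr => j _ do rewrite mulr_suml.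
rewrite exchange_big /=; apply: eq_bigr => i _.
by rewrite mulr_sumr; apply: eq_bigr => j _; rewrite mulrA.
Qed.

Definition Sp (R : realType) (C : nat -> 'M[R[i]]_2) (psi : nat -> R[i]) :=
  exists K (c : nat -> R[i]), psi = fun x => \sum_(i < K) c i * evolve C i (@e0 R) x.

Definition G (R : realType) (C : nat -> 'M[R[i]]_2) (psi : nat -> R[i]) :=
  exists M, Sp C (evolve C M psi).

Lemma Sp_step (R : realType) (C : nat -> 'M[R[i]]_2) psi : Sp C psi -> Sp C (stepU C psi).
Proof.
move=> [K [c ->]]; rewrite stepU_sum.
exists K.+1, (fun i => if i is i'.+1 then c i' else 0).
apply: funext => x; rewrite big_ord_recl /= mul0r add0r.
by apply: eq_bigr => i _.
Qed.

Lemma Sp_evolve (R : realType) (C : nat -> 'M[R[i]]_2) n psi : Sp C psi -> Sp C (evolve C n psi).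
Proof. by move=> h; elim: n => [//|n IH]; rewrite evolveS; apply: Sp_step. Qed.

Lemma Sp_lin (R : realType) (C : nat -> 'M[R[i]]_2) a b psi phi :
  Sp C psi -> Sp C phi -> Sp C (fun x => a * psi x + b * phi x).
Proof.
move=> [K1 [c1 ->]] [K2 [c2 ->]].
exists (K1 + K2), (fun i => a * (if (i < K1)%N then c1 i else 0)
                          + b * (if (i < K2)%N then c2 i else 0)).
apply: funext => x.
have E1 : \sum_(i < K1) c1 i * evolve C i (@e0 R) x =
    \sum_(i < K1 + K2) (if (i < K1)%N then c1 i else 0) * evolve C i (@e0 R) x.
  rewrite -(@sum_widen0 _ K1 (K1 + K2) (fun i => (if (i < K1)%N then c1 i else 0) * evolve C i (@e0 R) x)) ?leq_addr //.
  - by apply: eq_bigr => i _; rewrite (ltn_ord i).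
  - by move=> i h1 h2; rewrite ltnNge h1 mul0r.
have E2 : \sum_(i < K2) c2 i * evolve C i (@e0 R) x =
    \sum_(i < K1 + K2) (if (i < K2)%N then c2 i else 0) * evolve C i (@e0 R) x.
  rewrite -(@sum_widen0 _ K2 (K1 + K2) (fun i => (if (i < K2)%N then c2 i else 0) * evolve C i (@e0 R) x)) ?leq_addl //.
  - by apply: eq_bigr => i _; rewrite (ltn_ord i).
  - by move=> i h1 h2; rewrite ltnNge h1 mul0r.
rewrite E1 E2 !mulr_sumr -big_split /=; apply: eq_bigr => i _.
by rewrite mulrDl !mulrA.
Qed.

Lemma Sp_e0 (R : realType) (C : nat -> 'M[R[i]]_2) : Sp C (@e0 R).
Proof.
exists 1%N, (fun _ => 1); apply: funext => x.
by rewrite big_ord1 mul1r.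
Qed.

Lemma Sp_zero (R : realType) (C : nat -> 'M[R[i]]_2) : Sp C (fun _ => 0).
Proof. by exists 0%N, (fun _ => 0); apply: funext => x; rewrite big_ord0. Qed.

Lemma G_Sp (R : realType) (C : nat -> 'M[R[i]]_2) psi : Sp C psi -> G C psi.
Proof. by exists 0%N. Qed.

Lemma G_step (R : realType) (C : nat -> 'M[R[i]]_2) psi : G C psi -> G C (stepU C psi).
Proof. by move=> [M h]; exists M; rewrite -evolveSr evolveS; apply: Sp_step. Qed.

Lemma G_unstep (R : realType) (C : nat -> 'M[R[i]]_2) psi : G C (stepU C psi) -> G C psi.
Proof. by move=> [M h]; exists M.+1; rewrite evolveSr. Qed.

Lemma G_lin (R : realType) (C : nat -> 'M[R[i]]_2) a b psi phi :
  G C psi -> G C phi -> G C (fun x => a * psi x + b * phi x).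
Proof.
move=> [M1 h1] [M2 h2]; exists (M1 + M2)%N.
rewrite evolve_lin; apply: Sp_lin.
- by rewrite addnC evolveD; apply: Sp_evolve.
- by rewrite evolveD; apply: Sp_evolve.
Qed.

Definition ej (R : realType) (j : nat) : nat -> R[i] := fun k => (k == j)%:R.

Lemma e0_ej (R : realType) : @e0 R = ej R 0.
Proof. by apply: funext => k; rewrite /e0 /ej; case: (k == 0)%N. Qed.

Lemma stepU_ej (R : realType) (C : nat -> 'M[R[i]]_2) j :
  stepU C (ej R j) = fun x => C (j./2) ord1_2 (colj j) * ej R ((j./2).*2.+2) x
                         + C (j./2) ord2_2 (colj j) * ej R ((j./2).*2.-1) x.
Proof.
apply: funext => x.
have hs : supp_le (ej R j) j.+1 by move=> k hk; rewrite /ej; case: eqP => // e; move: hk; rewrite e ltnn.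
rewrite (stepU_fin _ _ hs) /ej.
rewrite (@sum_ind _ j.+1 j (fun k => Umat C k x)) // UmatE.
by rewrite mulrC [X in _ + X]mulrC.
Qed.


Lemma G_solve (R : realType) (C : nat -> 'M[R[i]]_2) chi s t a b :
  G C chi -> G C (ej R s) -> a != 0 ->
  chi = (fun x => a * ej R t x + b * ej R s x) -> G C (ej R t).
Proof.
move=> hc hs a0 E.
have -> : ej R t = fun x => a^-1 * chi x + (- (a^-1 * b)) * ej R s x.
  apply: funext => x; rewrite E; field; exact: a0.
exact: G_lin.
Qed.

Lemma half_dbl1 n : (n.*2.+1)./2 = n.
Proof. by elim: n => //= n ->. Qed.

Lemma G_all (R : realType) (C : nat -> 'M[R[i]]_2) :
  (forall n, C n ord1_2 ord1_2 != 0) -> forall j, G C (ej R j).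
Proof.
move=> hnt.
have G0 : G C (ej R 0) by rewrite -e0_ej; apply/G_Sp/Sp_e0.
have key : forall i, (forall j, (j <= i.*2.+1)%N -> G C (ej R j)) ->
    G C (ej R (i.*2.+2)).
  move=> i IH.
  apply: (@G_solve _ _ (stepU C (ej R (i.*2))) (i.*2.-1) _ (C i ord1_2 ord1_2) (C i ord2_2 ord1_2)).
  - by apply/G_step/IH; rewrite -!muln2; lia.
  - by apply: IH; rewrite -!muln2; lia.
  - exact: hnt.
  - by rewrite stepU_ej doubleK /colj odd_double.
have G2 : G C (ej R 2).
  apply: (@G_solve _ _ (stepU C (ej R 0)) 0 _ (C 0%N ord1_2 ord1_2) (C 0%N ord2_2 ord1_2)).
  - exact: G_step.
  - exact: G0.
  - exact: hnt.
  - by rewrite stepU_ej.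
have G1 : G C (ej R 1).
  apply: G_unstep; rewrite stepU_ej /=.
  by apply: G_lin.
suff H : forall i j, (j <= i.*2.+1)%N -> G C (ej R j).
  by move=> j; apply: (H j); rewrite -!muln2; lia.
elim=> [|i IH] j hj.
  by case: j hj => [|[|]].
have h2 := key i IH.
have h4 : G C (ej R (i.*2.+4)).
  apply: (@G_solve _ _ (stepU C (ej R (i.*2.+2))) (i.*2.+1) _ (C i.+1 ord1_2 ord1_2) (C i.+1 ord2_2 ord1_2)).
  - exact: G_step.
  - exact: IH.
  - exact: hnt.
  - rewrite stepU_ej -doubleS doubleK /colj odd_double.
    by rewrite !doubleS.
have h3 : G C (ej R (i.*2.+3)).
  apply: G_unstep; rewrite stepU_ej.
  have -> : (i.*2.+3)./2 = i.+1 by rewrite -[i.*2.+3]/((i.+1).*2.+1) half_dbl1.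
  rewrite doubleS /=.
  by apply: G_lin => //; apply: IH.
move: hj; rewrite doubleS leq_eqVlt => /orP [/eqP ->//|].
rewrite ltnS leq_eqVlt => /orP [/eqP ->//|].
by rewrite ltnS; apply: IH.
Qed.

Lemma G_sum (R : realType) (C : nat -> 'M[R[i]]_2) L (c : nat -> R[i]) (F : nat -> nat -> R[i]) :
  (forall j, G C (F j)) -> G C (fun x => \sum_(j < L) c j * F j x).
Proof.
move=> hF; elim: L => [|L IH].
  have -> : (fun x : nat => \sum_(j < 0) c j * F j x) = (fun _ => 0).
    by apply: funext => x; rewrite big_ord0.
  exact/G_Sp/Sp_zero.
have -> : (fun x => \sum_(j < L.+1) c j * F j x) =
   (fun x => 1 * (\sum_(j < L) c j * F j x) + c L * F L x).
  by apply: funext => x; rewrite big_ord_recr /= mul1r.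
exact: G_lin.
Qed.

Lemma G_local (R : realType) (C : nat -> 'M[R[i]]_2) psi L :
  (forall n, C n ord1_2 ord1_2 != 0) -> supp_le psi L -> G C psi.
Proof.
move=> hnt hs.
have -> : psi = fun x => \sum_(j < L) psi j * ej R j x.
  apply: funext => x; rewrite /ej.
  have [xL|xL] := ltnP x L.
    rewrite (bigD1 (Ordinal xL)) //= eqxx mulr1 big1 ?addr0 // => j /eqP nj.
    case: eqP => [e|]; last by rewrite mulr0.
    by exfalso; apply: nj; apply/val_inj; rewrite /= e.
  rewrite hs // big1 // => j _.
  case: eqP => [e|]; last by rewrite mulr0.
  by move: (ltn_ord j); rewrite -e ltnNge xL.
exact/G_sum/G_all.
Qed.


Lemma fin_of_bound (R : realType) (f : nat -> R) B : (forall n, 0 <= f n) ->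
  (forall N, \sum_(1 <= n < N) f n <= B) ->
  (\sum_(1 <= n <oo) (f n)%:E != +oo)%E.
Proof.
move=> f0 hB.
have : (\sum_(1 <= n <oo) (f n)%:E <= B%:E)%E.
  apply: lime_le.
    by apply: is_cvg_nneseries => n _ _; rewrite lee_fin.
  by apply: nearW => N /=; rewrite sumEFin lee_fin.
by case: (\sum_(1 <= n <oo) (f n)%:E)%E.
Qed.

Lemma bound_of_fin (R : realType) (g : nat -> R) : (forall n, 0 <= g n) ->
  (\sum_(1 <= n <oo) (g n)%:E != +oo)%E ->
  exists A, forall N, \sum_(1 <= n < N) g n <= A.
Proof.
move=> g0 hfin.
have S0 : (0 <= \sum_(1 <= n <oo) (g n)%:E)%E.
  by apply: nneseries_ge0 => n _ _; rewrite lee_fin.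
have hle : forall N, ((\sum_(1 <= n < N) g n)%:E <= \sum_(1 <= n <oo) (g n)%:E)%E.
  move=> N; rewrite -sumEFin; apply: nneseries_lim_ge => n _ _; rewrite lee_fin.
  exact: g0.
move: hfin S0 hle; case: (\sum_(1 <= n <oo) (g n)%:E)%E => // r _ _ hle.
by exists r => N; rewrite -lee_fin.
Qed.

Lemma cn_ge0 (R : realType) (z : R[i]) : 0 <= cnorm2 z.
Proof. by rewrite /cnorm2 addr_ge0 // sqr_ge0. Qed.

Lemma cn_add (R : realType) (z w : R[i]) :
  cnorm2 (z + w) <= 2 * cnorm2 z + 2 * cnorm2 w.
Proof.
case: z => a b; case: w => c d; rewrite /cnorm2 /=.
have := sqr_ge0 (a - c); have := sqr_ge0 (b - d); nra.
Qed.

Lemma cn_mul (R : realType) (z w : R[i]) : cnorm2 (z * w) = cnorm2 z * cnorm2 w.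
Proof. case: z => a b; case: w => c d; rewrite /cnorm2 /=; ring. Qed.

Lemma cn_sum (R : realType) N (F : nat -> R[i]) :
  cnorm2 (\sum_(i < N) F i) <= 2 ^+ N * \sum_(i < N) cnorm2 (F i).
Proof.
elim: N => [|N IH]; first by rewrite !big_ord0 /cnorm2 /= mulr0 expr0n /= add0r.
rewrite !big_ord_recr /=.
have h1 := cn_add (\sum_(i < N) F i) (F N).
have h2 : 0 <= \sum_(i < N) cnorm2 (F i) by apply: sumr_ge0 => i _; exact: cn_ge0.
have h3 : 1 <= 2 ^+ N :> R by apply: exprn_ege1; lra.
have h4 := cn_ge0 (F N).
rewrite exprS.
nra.
Qed.

Lemma shift_bound (R : realType) (g : nat -> R) A K N s :
  (forall n, 0 <= g n) -> (forall T, \sum_(1 <= m < T) g m <= A) -> (1 <= s)%N ->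
  \sum_(K <= n < N) g (n - K + s)%N <= A.
Proof.
move=> g0 hA s1.
have [KN|NK] := leqP K N; last first.
  rewrite big_geq ?(ltnW NK) //; apply: le_trans (hA 0%N).
  by rewrite big_geq.
rewrite -{1}[K]add0n big_addn.
have -> : \sum_(0 <= i < N - K) g (i + K - K + s)%N = \sum_(0 <= i < N - K) g (i + s)%N.
  by apply: eq_bigr => i _; rewrite addnK.
have -> : \sum_(0 <= i < N - K) g (i + s)%N = \sum_(s <= m < N - K + s) g m.
  by rewrite -{2}[s]add0n big_addn addnK.
apply: le_trans (hA (N - K + s)%N).
rewrite (@big_cat_nat _ _ _ s 1 (N - K + s)) ?leq_addl //=.
rewrite lerDr; apply: sumr_ge0 => i _; exact: g0.
Qed.


Lemma evolve_sum (R : realType) (C : nat -> 'M[R[i]]_2) n K (c : nat -> R[i]) F :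
  evolve C n (fun x => \sum_(i < K) c i * F i x) =
  (fun x => \sum_(i < K) c i * evolve C n (F i) x).
Proof. by elim: n => [//|n IH]; rewrite evolveS IH stepU_sum. Qed.

Lemma inner_sum (R : realType) K (c d : nat -> R[i]) (F H : nat -> nat -> R[i]) N :
  (forall k, (k < K)%N -> supp_le (F k) N) -> (forall l, (l < K)%N -> supp_le (H l) N) ->
  inner (fun x => \sum_(k < K) c k * F k x) (fun x => \sum_(l < K) d l * H l x)
  = \sum_(k < K) \sum_(l < K) (c k * (d l)^*) * inner (F k) (H l).
Proof.
move=> hF hH.
have hs : supp_le (fun x => \sum_(k < K) c k * F k x) N.
  by move=> x hx; rewrite big1 // => k _; rewrite hF // mulr0.
rewrite (inner_fin _ hs).
under eq_bigr => x _ do rewrite rmorph_sum /= mulr_suml.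
rewrite exchange_big /=; apply: eq_bigr => k _.
under eq_bigr => x _ do rewrite mulr_sumr.
rewrite exchange_big /=; apply: eq_bigr => l _.
rewrite (inner_fin _ (hF k (ltn_ord k))) mulr_sumr; apply: eq_bigr => x _.
rewrite rmorphM /=; ring.
Qed.

Lemma e0_supp (R : realType) : supp_le (@e0 R) 1.
Proof. by case=> [|k] //. Qed.

Lemma inner_shift (R : realType) (C : nat -> 'M[R[i]]_2) :
  (forall n, unitary2 (C n)) -> forall m l, (l <= m)%N ->
  inner (evolve C m (@e0 R)) (evolve C l (@e0 R)) = inner (evolve C (m - l) (@e0 R)) (@e0 R).
Proof.
move=> hU m l lm.
rewrite -{1}(subnK lm) addnC evolveD.
apply: (@evolve_iso _ _ hU l _ _ (1 + (m - l).*2)).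
- exact: evolve_supp (e0_supp R).
- by apply: supp_le_mono (e0_supp R); rewrite leq_addr.
Qed.

Lemma back (R : realType) (C : nat -> 'M[R[i]]_2) :
  (forall n, unitary2 (C n)) -> (forall n, C n ord1_2 ord1_2 != 0) ->
  forall psi L, supp_le psi L -> transient C (@e0 R) -> transient C psi.
Proof.
move=> hU hnt psi L hs he.
have [M [K [c Hchi]]] := G_local hnt hs.
pose a m := inner (evolve C m (@e0 R)) (@e0 R).
have Hb : forall n, (K <= n)%N -> inner (evolve C n psi) psi =
    \sum_(k < K) \sum_(l < K) (c k * (c l)^*) * a (n + k - l)%N.
  move=> n hn.
  rewrite -(@evolve_iso _ _ hU M _ _ (L + n.*2)); last first.
  - by apply: supp_le_mono hs; rewrite leq_addr.
  - exact: evolve_supp hs.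
  rewrite -evolveD addnC evolveD Hchi evolve_sum.
  have -> : (fun x => \sum_(i < K) c i * evolve C n (evolve C i (@e0 R)) x) =
            (fun x => \sum_(i < K) c i * evolve C (n + i) (@e0 R) x).
    by apply: funext => x; apply: eq_bigr => i _; rewrite evolveD.
  rewrite (@inner_sum _ K c c (fun k x => evolve C (n + k) (@e0 R) x)
              (fun l x => evolve C l (@e0 R) x) (1 + (n + K).*2)); last first.
  - move=> l lK; apply: supp_le_mono (@evolve_supp _ C l _ _ (e0_supp R)).
    by rewrite -!muln2; lia.
  - move=> k kK; apply: supp_le_mono (@evolve_supp _ C (n + k) _ _ (e0_supp R)).
    by rewrite -!muln2; lia.
  apply: eq_bigr => k _; apply: eq_bigr => l _.
  rewrite inner_shift //; move: (ltn_ord l); lia.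
pose g m := cnorm2 (a m).
have g0 : forall m, 0 <= g m by move=> m; exact: cn_ge0.
have [A hA] : exists A, forall N, \sum_(1 <= n < N) g n <= A.
  apply: bound_of_fin => //; exact/eqP.
pose f n := cnorm2 (inner (evolve C n psi) psi).
have f0 : forall n, 0 <= f n by move=> n; exact: cn_ge0.
pose T := 2 ^+ K * \sum_(k < K) (2 ^+ K * \sum_(l < K) (cnorm2 (c k * (c l)^*) * A)).
have hf : forall n, (K.+1 <= n)%N -> f n <=
    2 ^+ K * \sum_(k < K) (2 ^+ K * \sum_(l < K) (cnorm2 (c k * (c l)^*) * g (n + k - l)%N)).
  move=> n hn; rewrite /f Hb; last exact: ltnW.
  apply: le_trans (cn_sum K (fun k => \sum_(l < K) (c k * (c l)^*) * a (n + k - l)%N)) _.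
  apply: ler_wpM2l; first by apply: exprn_ge0.
  apply: ler_sum => k _.
  apply: le_trans (cn_sum K (fun l => (c k * (c l)^*) * a (n + k - l)%N)) _.
  apply: ler_wpM2l; first by apply: exprn_ge0.
  by apply: ler_sum => l _; rewrite cn_mul.
have hT : forall N, \sum_(K.+1 <= n < N) f n <= T.
  move=> N.
  apply: le_trans (ler_sum_nat (fun n hn => hf n (proj1 (andP hn)))) _.
  rewrite -mulr_sumr exchange_big /= /T.
  apply: ler_wpM2l; first by apply: exprn_ge0.
  apply: ler_sum => k _.
  rewrite -mulr_sumr; apply: ler_wpM2l; first by apply: exprn_ge0.
  rewrite exchange_big /=; apply: ler_sum => l _.
  rewrite -mulr_sumr; apply: ler_wpM2l; first exact: cn_ge0.
  have -> : \sum_(K.+1 <= i < N) g (i + k - l)%N =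
            \sum_(K.+1 <= i < N) g (i - K.+1 + (K.+1 + k - l))%N.
    apply: eq_big_nat => n /andP [h1 h2]; congr (g _).
    move: (ltn_ord l) (ltn_ord k) h1; lia.
  apply: shift_bound => //; move: (ltn_ord l); lia.
rewrite /transient /recurrent; apply/eqP.
apply: (@fin_of_bound _ f (\sum_(1 <= n < K.+1) f n + T) f0).
move=> N.
apply: (@le_trans _ _ (\sum_(1 <= n < maxn N K.+1) f n)).
  have [NK|NK] := leqP N 1.
    rewrite big_geq // sumr_ge0 // => n _; exact: f0.
  rewrite (@big_cat_nat _ _ _ N 1 (maxn N K.+1)) ?leq_maxl ?(ltnW NK) //=.
  by rewrite lerDl sumr_ge0 // => n _; exact: f0.
rewrite (@big_cat_nat _ _ _ K.+1 1 (maxn N K.+1)) ?leq_maxr //=.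
by rewrite lerD2l.
Qed.


Lemma e0_local (R : realType) : local_state (@e0 R).
Proof.
split; last by exists 1%N => k; case: k.
have key : forall m, (\sum_(0 <= k < m.+1) (cnorm2 (@e0 R k))%:E = 1)%E.
  move=> m; rewrite big_nat_recl // big1_seq; last first.
    by move=> k _; rewrite /e0 /cnorm2 /= expr0n /= add0r.
  by rewrite /e0 /cnorm2 /= expr1n expr0n /= !addr0.
rewrite /is_state; apply: lim_near_cst; first exact: ereal_hausdorff.
near=> n.
have n1 : (0 < n)%N by near: n; exists 1%N.
by rewrite -(prednK n1) key.
Unshelve. all: by end_near.
Qed.

Unset Implicit Arguments. Set Strict Implicit.

Theorem corollary1 (R : realType) (C : nat -> 'M[R[i]]_2)
  (hU : forall n, unitary2 (C n))
  (hnt : forall n, C n ord1_2 ord1_2 != 0) :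
  (forall psi : nat -> R[i], local_state psi -> transient C psi)
  <-> transient C (@e0 R).
Proof.
split; first by move=> H; apply: H; exact: e0_local.
move=> he psi [_ [N hN]].
exact: (back hU hnt hN he).
Qed.
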